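(* Let $r$ be a positive integer and $p$ a prime. Then $p_{b(r)+1}^2\notin F_r$ and $p^3\notin F_r$.
   Context: $p_i$ denotes the $i$-th prime. For a positive integer $r$, $S_r$ is the multiplicative arithmetic function with $S_r(q^{\alpha})=0$ if $q\leq r$ and $S_r(q^{\alpha})=q^{\alpha-1}(q-r)$ if $q>r$, for all primes $q$ and positive integers $\alpha$. $B_r=\{n\in\mathbb{N}: S_r(n)>0\}$ (positive integers whose smallest prime factor exceeds $r$, together with $1$). $F_r$ is the set of $n\in B_r$ such that $S_r(n)<S_r(m)$ for all $m\in B_r$ with $m>n$. $b(1)=0$, and for $r\geq 2$, $b(r)$ is the largest integer with $p_{b(r)}\leq r$. *)

(* Defs.v *)
From mathcomp Require Import all_boot.
Set Implicit Arguments. Unset Strict Implicit. Unset Printing Implicit Defensive.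

Lemma ex_prime_above (n : nat) : exists p, (n < p) && prime p.
Proof. by case: (prime_above n) => p Hp Pp; exists p; rewrite Hp Pp. Qed.

Definition next_prime (n : nat) : nat := ex_minn (ex_prime_above n).

(* nth_prime i = p_i, the i-th prime (1-indexed: p_1 = 2, p_2 = 3, ...);
   nth_prime 0 = 1 is an auxiliary value. *)
Fixpoint nth_prime (i : nat) : nat :=
  match i with
  | 0 => 1
  | i'.+1 => next_prime (nth_prime i')
  end.

(* b(r): largest integer b with p_b <= r (b(1) = 0, since p_0 := 1 <= r and p_1 = 2).
   Since p_b > b, such b satisfy b < r.+1, so the bounded max is exact. *)
Definition bidx (r : nat) : nat := \max_(b < r.+1 | nth_prime b <= r) b.

Definition S (r n : nat) : nat :=
  \prod_(q <- primes n) (if q <= r then 0 else q ^ (logn q n).-1 * (q - r)).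

Definition inB (r n : nat) : Prop := 0 < n /\ 0 < S r n.

Definition inF (r n : nat) : Prop :=
  inB r n /\ forall m, inB r m -> n < m -> S r n < S r m.

(* Main.v *)
Require Import Defs.
From mathcomp Require Import all_boot zify ring.
Set Implicit Arguments. Unset Strict Implicit. Unset Printing Implicit Defensive.

Lemma f1 a : a %/ 2 + a %/ 3 + a %/ 5 <= a + a %/ 30.
Proof. lia. Qed.
Lemma f2 a : a + a %/ 30 <= a %/ 2 + a %/ 3 + a %/ 5 + 1.
Proof. lia. Qed.
Lemma f3 a : 0 < a -> a < 6 -> a %/ 2 + a %/ 3 + a %/ 5 + 1 <= a + a %/ 30.
Proof. by case: a => [|[|[|[|[|[|]]]]]]. Qed.

Lemma dvd_from_log a b : 0 < a -> 0 < b ->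
  (forall p, prime p -> logn p a <= logn p b) -> a %| b.
Proof.
move=> a0 b0 H; apply/(dvdn_partP _ a0) => p; rewrite mem_primes => /andP[pp _].
by rewrite p_part pfactor_dvdn // H.
Qed.

Lemma logn_prodp q (e : nat -> nat) N : prime q ->
  logn q (\prod_(0 <= p < N | prime p) p ^ e p) = (q < N) * e q.
Proof.
move=> qp; elim: N => [|N IH]; first by rewrite big_geq // logn1.
rewrite big_mkcond big_nat_recr //= -big_mkcond.
have pos : 0 < \prod_(0 <= p < N | prime p) p ^ e p.
  by apply: prodn_cond_gt0 => i /prime_gt0 i0; rewrite expn_gt0 i0.
case: ifP => NP.
  rewrite lognM // ?expn_gt0 ?prime_gt0 // IH lognX logn_prime //.
  have [->|qN] := eqVneq q N; first by rewrite ltnn ltnSn /=; lia.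
  by rewrite ltnS [q <= N]leq_eqVlt (negbTE qN) /=; lia.
rewrite muln1 IH ltnS [q <= N]leq_eqVlt; have [qN|] := eqVneq q N => //=.
by rewrite -qN qp in NP.
Qed.

Definition Psi n := \prod_(0 <= p < n.+1 | prime p) p ^ trunc_log p n.

Lemma Psi_gt0 n : 0 < Psi n.
Proof. by apply: prodn_cond_gt0 => i /prime_gt0 i0; rewrite expn_gt0 i0. Qed.

Lemma logn_Psi q n : prime q -> logn q (Psi n) = trunc_log q n.
Proof.
move=> qp; rewrite /Psi logn_prodp //; case: ltnP => H; first by rewrite mul1n.
rewrite mul0n; apply/esym/eqP; rewrite trunc_log_eq0; apply/orP; right; lia.
Qed.

Lemma trunc_log_le p n : trunc_log p n <= n.
Proof.
case: (leqP p 1) => p1.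
  by case: p p1 => [|[|]] // _; rewrite ?trunc_log0n ?trunc_log1n.
case: n => [|n]; first by rewrite trunc_log0.
have := trunc_logP p1 (ltn0Sn n) => H.
apply: leq_trans H; apply: ltnW; apply: leq_ltn_trans (ltn_expl _ p1).
by [].
Qed.

Lemma pow_le_tl p n k : 1 < p -> 0 < k -> (p ^ k <= n) = (k <= trunc_log p n).
Proof.
move=> p1 k0; apply/idP/idP => H; first exact: trunc_log_max.
case: n H => [|n] H.
  by rewrite trunc_log0 leqn0 in H; rewrite (eqP H) in k0.
by apply: leq_trans (trunc_logP p1 (ltn0Sn n)); rewrite leq_exp2l.
Qed.

Lemma sum_indic N T : T <= N -> \sum_(1 <= k < N.+1) (k <= T) = T.
Proof.
elim: N T => [|N IH] T TN.
  by rewrite big_geq //; move: TN; rewrite leqn0 => /eqP->.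
rewrite big_nat_recr //=; case: (leqP T N) => TN'.
  by rewrite IH // addn0.
have -> : T = N.+1 by apply/eqP; rewrite eqn_leq TN TN'.
have E : \sum_(1 <= i < N.+1) (i <= N.+1) = \sum_(1 <= i < N.+1) (i <= N).
  by apply: eq_big_nat => i /andP[_]; rewrite ltnS => iN; rewrite iN (leqW iN).
rewrite E IH //; lia.
Qed.

Lemma logn_fact_w p n N : prime p -> n <= N ->
  logn p n`! = \sum_(1 <= k < N.+1) n %/ p ^ k.
Proof.
move=> pp nN; rewrite logn_fact // [RHS](big_cat_nat _ (n := n.+1)) //=.
rewrite [X in _ + X]big1_seq ?addn0 // => k /andP[_]; rewrite mem_index_iota => /andP[nk _].
apply: divn_small; apply: leq_trans nk (ltnW (ltn_expl _ (prime_gt1 pp))).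
Qed.
Definition G m := (30 * m)`! * m`!.
Definition H m := (15 * m)`! * (10 * m)`! * (6 * m)`!.

Lemma G_gt0 m : 0 < G m. Proof. by rewrite muln_gt0 !fact_gt0. Qed.
Lemma H_gt0 m : 0 < H m. Proof. by rewrite !muln_gt0 !fact_gt0. Qed.

Lemma logn_G p m : prime p -> logn p (G m) =
  \sum_(1 <= k < (30 * m).+1) (30 * m %/ p ^ k + 30 * m %/ p ^ k %/ 30).
Proof.
move=> pp; rewrite /G lognM ?fact_gt0 // big_split /=.
rewrite (logn_fact_w (N := 30 * m)) // (logn_fact_w (n := m) (N := 30 * m)) //; last lia.
congr (_ + _); apply: eq_bigr => k _.
by rewrite divnAC mulKn.
Qed.

Lemma logn_H p m : prime p -> logn p (H m) =
  \sum_(1 <= k < (30 * m).+1)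
    (30 * m %/ p ^ k %/ 2 + 30 * m %/ p ^ k %/ 3 + 30 * m %/ p ^ k %/ 5).
Proof.
move=> pp; rewrite /H !lognM ?muln_gt0 ?fact_gt0 // !big_split /=.
rewrite (logn_fact_w (n := 15 * m) (N := 30 * m)) //; last lia.
rewrite (logn_fact_w (n := 10 * m) (N := 30 * m)) //; last lia.
rewrite (logn_fact_w (n := 6 * m) (N := 30 * m)) //; last lia.
congr (_ + _ + _); apply: eq_bigr => k _; rewrite divnAC.
- by rewrite (_ : 30 * m = 2 * (15 * m)) ?mulKn // mulnA.
- by rewrite (_ : 30 * m = 3 * (10 * m)) ?mulKn // mulnA.
- by rewrite (_ : 30 * m = 5 * (6 * m)) ?mulKn // mulnA.
Qed.

Lemma logn_Psi_sum p n N : prime p -> n <= N ->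
  logn p (Psi n) = \sum_(1 <= k < N.+1) (k <= trunc_log p n).
Proof.
move=> pp nN; rewrite logn_Psi // sum_indic //.
exact: leq_trans (trunc_log_le p n) nN.
Qed.

Lemma D1 m : G m %| H m * Psi (30 * m).
Proof.
have pos : 0 < H m * Psi (30 * m) by rewrite muln_gt0 H_gt0 Psi_gt0.
apply: (dvd_from_log (G_gt0 m) pos) => p pp.
rewrite (lognM p (H_gt0 m) (Psi_gt0 _)) logn_G // logn_H // (logn_Psi_sum (N := 30 * m)) //.
rewrite -big_split /=; apply: leq_sum => k _.
set a := 30 * m %/ p ^ k.
case: (leqP k (trunc_log p (30 * m))) => kT; first by rewrite f2.
have -> : a = 0.
  apply: divn_small; rewrite ltnNge.
  case: k kT {a} => [|k] kT; first by rewrite ltn0 in kT.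
  by rewrite pow_le_tl ?prime_gt1 // -ltnNge.
by [].
Qed.

Lemma D2 m : H m * Psi (30 * m) %| G m * Psi (5 * m).
Proof.
have pos : 0 < H m * Psi (30 * m) by rewrite muln_gt0 H_gt0 Psi_gt0.
have pos' : 0 < G m * Psi (5 * m) by rewrite muln_gt0 G_gt0 Psi_gt0.
apply: (dvd_from_log pos pos') => p pp.
rewrite (lognM p (H_gt0 m) (Psi_gt0 _)) (lognM p (G_gt0 m) (Psi_gt0 _)) logn_G // logn_H //.
rewrite (logn_Psi_sum (n := 30 * m) (N := 30 * m)) //.
rewrite (logn_Psi_sum (n := 5 * m) (N := 30 * m)) //; last lia.
rewrite -!big_split /= big_nat_cond [X in _ <= X]big_nat_cond.
apply: leq_sum => k /andP[/andP[k1 _] _].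
set a := 30 * m %/ p ^ k.
have p1 := prime_gt1 pp.
case: (leqP k (trunc_log p (5 * m))) => k5.
  by apply: leq_add; [exact: f1 | exact: leq_b1].
case: (leqP k (trunc_log p (30 * m))) => k30; last first.
  by rewrite !addn0 f1.
rewrite addn0; apply: f3.
  by rewrite /a divn_gt0 ?expn_gt0 ?prime_gt0 // pow_le_tl.
rewrite /a ltn_divLR ?expn_gt0 ?prime_gt0 //.
have : 5 * m < p ^ k by rewrite ltnNge pow_le_tl // -ltnNge.
lia.
Qed.
Definition K := 2 ^ 14 * 3 ^ 9 * 5 ^ 5.
Definition A m := \prod_(0 <= i < 30) (30 * m + i.+1) * m.+1.
Definition B m := \prod_(0 <= i < 15) (15 * m + i.+1) * \prod_(0 <= i < 10) (10 * m + i.+1) * \prod_(0 <= i < 6) (6 * m + i.+1).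

Lemma K_gt0 : 0 < K. Proof. by rewrite /K !muln_gt0. Qed.

Lemma A_eq m : let t := 30 * m in
  30 * A m = ((t+1)*(t+7)*(t+11)*(t+13)*(t+17)*(t+19)*(t+23)*(t+29)) *
   ((t+2)*(t+3)*(t+4)*(t+5)*(t+8)*(t+9)*(t+14)*(t+16)*(t+21)*(t+22)*(t+25)*(t+26)*(t+27)*(t+28)) *
   ((t+6)*(t+10)*(t+12)*(t+15)*(t+18)*(t+20)*(t+24)) * ((t+30)*(t+30)).
Proof. move=> t; rewrite /A !big_nat_recr //= big_geq // /t; ring. Qed.

Lemma B_eq m : let t := 30 * m in
  30 * K * B m = 
   ((t+2)*(t+3)*(t+4)*(t+5)*(t+8)*(t+9)*(t+14)*(t+16)*(t+21)*(t+22)*(t+25)*(t+26)*(t+27)*(t+28)) *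
   ((t+6)*(t+10)*(t+12)*(t+15)*(t+18)*(t+20)*(t+24)) * 
   ((t+6)*(t+10)*(t+12)*(t+15)*(t+18)*(t+20)*(t+24)) * ((t+30)*(t+30)*(t+30)).
Proof. move=> t; rewrite /B /K !big_nat_recr //= !big_geq // /t; ring. Qed.

Lemma up_core t : (t+1)*(t+7)*(t+11)*(t+13)*(t+17)*(t+19)*(t+23)*(t+29) <=
  (t+6)*(t+10)*(t+12)*(t+15)*(t+18)*(t+20)*(t+24)*(t+30).
Proof. by repeat apply: leq_mul; rewrite leq_add2l. Qed.

Lemma low_core t : (t+6)*(t+10)*(t+12)*(t+15)*(t+18)*(t+20)*(t+24)*(t+30) <=
  (t+7)*(t+11)*(t+13)*(t+17)*(t+19)*(t+23)*(t+29)*(t+31).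
Proof. by repeat apply: leq_mul; rewrite leq_add2l. Qed.

Lemma AB_up m : A m <= K * B m.
Proof.
rewrite -(leq_pmul2l (isT : 0 < 30)) mulnA A_eq B_eq.
set t := 30 * m.
set C := (t+1)*(t+7)*(t+11)*(t+13)*(t+17)*(t+19)*(t+23)*(t+29).
set S1 := (t+2)*(t+3)*(t+4)*(t+5)*(t+8)*(t+9)*(t+14)*(t+16)*(t+21)*(t+22)*(t+25)*(t+26)*(t+27)*(t+28).
set D := (t+6)*(t+10)*(t+12)*(t+15)*(t+18)*(t+20)*(t+24).
have h : C <= D * (t + 30) by exact: up_core.
have -> : C * S1 * D * ((t + 30) * (t + 30)) = (S1 * D * ((t+30)*(t+30))) * C by ring.
have -> : S1 * D * D * ((t + 30) * (t + 30) * (t + 30)) =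
   (S1 * D * ((t+30)*(t+30))) * (D * (t + 30)) by ring.
exact: leq_mul.
Qed.

Lemma AB_low m : K * B m * (30 * m + 1) <= (30 * m.+1 + 1) * A m.
Proof.
rewrite -(leq_pmul2l (isT : 0 < 30)).
rewrite [X in X <= _]mulnA [X in X * _ <= _]mulnA mulnCA.
rewrite (_ : 30 * m.+1 + 1 = 30 * m + 31); last lia.
rewrite A_eq B_eq.
set t := 30 * m.
set S1 := (t+2)*(t+3)*(t+4)*(t+5)*(t+8)*(t+9)*(t+14)*(t+16)*(t+21)*(t+22)*(t+25)*(t+26)*(t+27)*(t+28).
set D := (t+6)*(t+10)*(t+12)*(t+15)*(t+18)*(t+20)*(t+24).
set C2 := (t+7)*(t+11)*(t+13)*(t+17)*(t+19)*(t+23)*(t+29).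
have h : D * (t + 30) <= C2 * (t + 31) by exact: low_core.
have -> : (t + 1) * (t + 7) * (t + 11) * (t + 13) * (t + 17) * (t + 19) * (t + 23) * (t + 29)
   = (t + 1) * C2 by rewrite /C2; ring.
have -> : S1 * D * D * ((t + 30) * (t + 30) * (t + 30)) * (t + 1) =
   (S1 * D * ((t+30)*(t+30)) * (t + 1)) * (D * (t + 30)) by ring.
have -> : (t + 31) * ((t + 1) * C2 * S1 * D * ((t + 30) * (t + 30))) =
   (S1 * D * ((t+30)*(t+30)) * (t + 1)) * (C2 * (t + 31)) by ring.
exact: leq_mul.
Qed.

Lemma factD n k : (n + k)`! = n`! * \prod_(0 <= i < k) (n + i.+1).
Proof.
elim: k => [|k IH]; first by rewrite addn0 big_geq // muln1.
by rewrite addnS factS IH big_nat_recr //= addnS; ring.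
Qed.

Lemma G_S m : G m.+1 = G m * A m.
Proof.
rewrite /G /A (_ : 30 * m.+1 = 30 * m + 30); last lia.
by rewrite factD factS; ring.
Qed.

Lemma H_S m : H m.+1 = H m * B m.
Proof.
rewrite /H /B (_ : 15 * m.+1 = 15 * m + 15); last lia.
rewrite (_ : 10 * m.+1 = 10 * m + 10); last lia.
rewrite (_ : 6 * m.+1 = 6 * m + 6); last lia.
by rewrite !factD; ring.
Qed.

Lemma Gup_gen k : (forall m, A m <= k * B m) -> forall m, G m <= k ^ m * H m.
Proof.
move=> hk; elim=> [|m IH]; first by [].
rewrite G_S H_S expnS.
have -> : k * k ^ m * (H m * B m) = (k ^ m * H m) * (k * B m) by ring.
exact: leq_mul IH (hk m).
Qed.

Lemma Glow_gen k : (forall m, k * B m * (30 * m + 1) <= (30 * m.+1 + 1) * A m) ->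
  forall m, k ^ m * H m <= (30 * m + 1) * G m.
Proof.
move=> hk; elim=> [|m IH]; first by rewrite expn0 mul1n /H /G !muln0.
rewrite G_S H_S expnS.
have -> : k * k ^ m * (H m * B m) = (k ^ m * H m) * (k * B m) by ring.
apply: leq_trans (leq_mul IH (leqnn (k * B m))) _.
have -> : (30 * m + 1) * G m * (k * B m) = G m * (k * B m * (30 * m + 1)) by ring.
have -> : (30 * m.+1 + 1) * (G m * A m) = G m * ((30 * m.+1 + 1) * A m) by ring.
exact: leq_mul (leqnn _) (hk m).
Qed.

Lemma Gup m : G m <= K ^ m * H m.
Proof. exact: Gup_gen AB_up m. Qed.

Lemma Glow m : K ^ m * H m <= (30 * m + 1) * G m.
Proof. exact: Glow_gen AB_low m. Qed.

Lemma Psi_low m : K ^ m <= (30 * m + 1) * Psi (30 * m).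
Proof.
have h1 : G m <= H m * Psi (30 * m).
  by apply: dvdn_leq; [rewrite muln_gt0 H_gt0 Psi_gt0 | exact: D1].
have := leq_trans (Glow m) (leq_mul (leqnn (30 * m + 1)) h1).
rewrite mulnCA mulnC leq_pmul2l //; exact: H_gt0.
Qed.

Lemma Psi_rec m : Psi (30 * m) <= K ^ m * Psi (5 * m).
Proof.
have h1 : H m * Psi (30 * m) <= G m * Psi (5 * m).
  by apply: dvdn_leq; [rewrite muln_gt0 G_gt0 Psi_gt0 | exact: D2].
have := leq_trans h1 (leq_mul (Gup m) (leqnn (Psi (5 * m)))).
rewrite (mulnC (K ^ m)) -mulnA leq_pmul2l //; exact: H_gt0.
Qed.
Lemma Psi_mono a b : a <= b -> Psi a <= Psi b.
Proof.
move=> ab; apply: dvdn_leq; first exact: Psi_gt0.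
apply: dvd_from_log; rewrite ?Psi_gt0 // => p pp.
by rewrite !logn_Psi // leq_trunc_log.
Qed.

Lemma Psi_rec_d d : forall m, m <= 6 ^ d ->
  Psi (30 * m) ^ 5 <= K ^ (6 * m + 5 * d) * Psi 5 ^ 5.
Proof.
elim: d => [|d IH] m.
  rewrite expn0 => m1; case: m m1 => [|[|]] // _.
    by rewrite !muln0 addn0 expn0 mul1n leq_exp2r // Psi_mono.
  have h := Psi_rec 1; rewrite muln1 in h.
  apply: leq_trans (_ : (K ^ 1 * Psi 5) ^ 5 <= _).
    by rewrite leq_exp2r.
  rewrite expnMn -expnM leq_mul2r; apply/orP; right.
  by rewrite leq_pexp2l // K_gt0.
move=> mle.
set m' := (m + 5) %/ 6.
have m'le : m' <= 6 ^ d by move: mle; rewrite expnS /m'; lia.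
have h1 := IH m' m'le.
have h2 : Psi (30 * m) <= K ^ m * Psi (30 * m').
  apply: leq_trans (Psi_rec m) _; rewrite leq_mul2l; apply/orP; right.
  by apply: Psi_mono; rewrite /m'; lia.
apply: leq_trans (_ : (K ^ m * Psi (30 * m')) ^ 5 <= _).
  by rewrite leq_exp2r.
rewrite expnMn -expnM.
apply: leq_trans (leq_mul (leqnn _) h1) _.
rewrite mulnA -expnD leq_mul2r; apply/orP; right.
rewrite leq_pexp2l ?K_gt0 //; rewrite /m'; lia.
Qed.

Lemma prod_if_le N s y : 0 < y ->
  \prod_(0 <= p < N | prime p) (if p < s then y else 1) <= y ^ s.
Proof.
move=> y0; suff : \prod_(0 <= p < N | prime p) (if p < s then y else 1) <= y ^ (minn N s).
  by move=> h; apply: leq_trans h _; rewrite leq_pexp2l // geq_minr.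
elim: N => [|N IH]; first by rewrite big_geq // expn_gt0 y0.
rewrite big_mkcond big_nat_recr //= -big_mkcond.
case: (ltnP N s) => Ns.
  rewrite (_ : minn N.+1 s = (minn N s).+1); last by rewrite !minnE; lia.
  rewrite expnS mulnC; apply: leq_mul => //.
  by case: (prime N).
rewrite (_ : minn N.+1 s = minn N s); last by rewrite !minnE; lia.
by case: (prime N); rewrite muln1.
Qed.

Lemma Psi_gap x y s : 0 < y -> x <= y ->
  (forall p, prime p -> x < p -> p <= y -> False) -> y < s * s ->
  Psi y <= Psi x * y ^ s.
Proof.
move=> y0 xy noP ys.
rewrite {1}/Psi (big_cat_nat _ (n := x.+1)) ?ltnS //=.
rewrite [X in _ * X <= _]big1_seq ?muln1; last first.
  move=> i /andP[ip]; rewrite mem_index_iota ltnS => /andP[xi iy].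
  by case: (noP i ip xi iy).
apply: leq_trans (leq_mul (leqnn (Psi x)) (prod_if_le x.+1 s y0)).
rewrite /Psi -big_split /= big_nat_cond [X in _ <= X]big_nat_cond.
apply: leq_prod => p /andP[/andP[_ px] pp].
have p1 := prime_gt1 pp.
case: (ltnP p s) => ps.
  apply: leq_trans (_ : y <= _).
    by apply: trunc_logP.
  by rewrite leq_pmull // expn_gt0 prime_gt0.
rewrite muln1; apply: leq_trans (_ : p ^ 1 <= _); last first.
  by rewrite leq_exp2l // -pow_le_tl // expn1 -ltnS.
rewrite leq_exp2l //; rewrite leqNgt; apply/negP => h.
have : p ^ 2 <= y by rewrite pow_le_tl.
rewrite leqNgt => /negP; apply; apply: leq_trans ys _.
by rewrite expnS expn1 leq_mul.
Qed.
Lemma Psi5 : Psi 5 = 60. Proof. rewrite /Psi unlock; vm_compute; reflexivity. Qed.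

Lemma K39 : 2 ^ 39 <= K.
Proof.
rewrite /K (_ : 39 = 14 + 14 + 11); last by [].
rewrite !expnD; apply: leq_mul; first apply: leq_mul.
- exact: leqnn.
- by [].
- by [].
Qed.

Lemma h64 h : 10 <= h -> 64 * h <= 2 ^ h.
Proof.
elim: h => // h IH; rewrite leq_eqVlt => /orP[/eqP<-|]; first by [].
rewrite ltnS => hh; have h1 := IH hh; rewrite expnS; lia.
Qed.

Lemma arith1 x h u : 200 * 1000 <= x -> 64 * h <= u ->
  1024 * u <= 120 * ((x + x %/ 2) %/ 30) ->
  6 * (x %/ 30 + 1) + 5 * h < 5 * ((x + x %/ 2) %/ 30).
Proof. lia. Qed.
Lemma arith2 x h u w : 200 * 1000 <= x -> 64 * h <= u ->
  1024 * u <= 120 * ((x + x %/ 2) %/ 30) ->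
  64 * w <= 120 * ((x + x %/ 2) %/ 30) ->
  39 * (5 * ((x + x %/ 2) %/ 30) - (6 * (x %/ 30 + 1) + 5 * h)) <= 10 * h + 30 + 10 * w -> False.
Proof. lia. Qed.

Lemma finish x a c h u k : a = x %/ 30 + 1 -> c = (x + x %/ 2) %/ 30 ->
  200 * 1000 <= x -> 64 * h <= u -> 1024 * u <= 120 * c -> 64 * (h * u) <= 120 * c ->
  2 ^ 39 <= k -> 0 < k ->
  k ^ (5 * c) <= k ^ (6 * a + 5 * h) * (2 ^ (10 * h) * 60 ^ 5 * 2 ^ (10 * (h * u))) -> False.
Proof.
move=> ea ec xl hu uc hu2 k39 k0 E2.
have e0 : 6 * a + 5 * h < 5 * c by rewrite ea ec; apply: arith1 xl hu _; rewrite -ec.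
have F3 : 60 ^ 5 <= 2 ^ 30.
  rewrite (_ : 30 = 6 * 5); last by [].
  by rewrite (expnM 2 6 5) leq_exp2r.
move: E2 F3; move: (60 ^ 5) => Q E2 F3.
have ee : 5 * c = (6 * a + 5 * h) + (5 * c - (6 * a + 5 * h)) by rewrite (subnKC (ltnW e0)).
have epos : 0 < 5 * c - (6 * a + 5 * h) by rewrite subn_gt0.
move: E2; rewrite [X in k ^ X <= _]ee expnD leq_pmul2l ?expn_gt0 ?k0 // => E2.
have E3 : 2 ^ (39 * (5 * c - (6 * a + 5 * h))) <= 2 ^ (10 * h + 30 + 10 * (h * u)).
  apply: leq_trans (_ : k ^ (5 * c - (6 * a + 5 * h)) <= _).
    by rewrite expnM leq_exp2r.
  apply: leq_trans E2 _.
  rewrite !expnD leq_mul2r; apply/orP; right; rewrite leq_mul2l; apply/orP; right.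
  exact: F3.
rewrite leq_exp2l // in E3.
move: E3; rewrite ea ec => E3.
by apply: arith2 xl hu _ _ E3; rewrite -ec.
Qed.

Lemma no_gap x : 200 * 1000 <= x ->
  (forall p, prime p -> x < p -> p <= x + x %/ 2 -> False) -> False.
Proof.
move=> xl noP.
set a := x %/ 30 + 1.
set c := (x + x %/ 2) %/ 30.
set y := 30 * c.
have y0 : 0 < y by rewrite /y /c; lia.
have ac : a <= c by rewrite /a /c; lia.
set h := (trunc_log 4 y).+1.
set u := 2 ^ h.
have yl : 4 ^ (trunc_log 4 y) <= y by apply: trunc_logP.
have yc : y = 30 * c by [].
have yu : y < 4 ^ h by apply: trunc_log_ltn.
have uu : u * u = 4 ^ h by rewrite /u -expnMn.
have u120 : u * u <= 120 * c.
  rewrite uu /h expnS; lia.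
have h10 : 10 <= h.
  rewrite leqNgt; apply/negP => hs.
  have : 4 ^ h <= 4 ^ 9 by rewrite leq_exp2l.
  have : 4 ^ 9 < y by rewrite /y /c; lia.
  lia.
have hu : 64 * h <= u by apply: h64.
have u1024 : 2 ^ 10 <= u by rewrite leq_exp2l.
have hu2 : 64 * (h * u) <= 120 * c.
  apply: leq_trans u120; rewrite mulnA leq_mul2r hu orbT //.
have uc : 1024 * u <= 120 * c.
  by apply: leq_trans u120; rewrite leq_mul2r u1024 orbT.
have L := Psi_low c.
have Gp : Psi y <= Psi (30 * a) * y ^ u.
  apply: Psi_gap => //; first by rewrite /y leq_mul2l ac orbT.
    move=> p pp p1 p2; apply: (noP p pp); rewrite /a /y /c in p1 p2 *; lia.
  by rewrite uu.
have a6 : a <= 6 ^ h.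
  apply: leq_trans ac _; apply: leq_trans (_ : y <= _).
    by rewrite /y; lia.
  by apply: leq_trans (ltnW yu) _; rewrite leq_exp2r // /h.
have R := Psi_rec_d a6.
rewrite Psi5 in R.
have y1 : y + 1 <= 2 ^ (2 * h) by rewrite expnM (_ : 2 ^ 2 = 4) // addn1.
have y2 : y <= 2 ^ (2 * h) by apply: leq_trans y1; rewrite addn1.
have P5 : 60 <= 2 ^ 6 by [].
have E1 : K ^ (5 * c) <= (y + 1) ^ 5 * (Psi (30 * a) ^ 5 * (y ^ u) ^ 5).
  rewrite mulnC expnM -expnMn -expnMn leq_exp2r //.
  apply: leq_trans L _; rewrite leq_mul2l; apply/orP; right; exact: Gp.
have F1 : (y + 1) ^ 5 <= 2 ^ (10 * h).
  rewrite (_ : 10 * h = 2 * h * 5); last lia.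
  by rewrite (expnM 2 (2 * h) 5) leq_exp2r.
have F2 : (y ^ u) ^ 5 <= 2 ^ (10 * (h * u)).
  rewrite (_ : 10 * (h * u) = 2 * h * u * 5); last lia.
  rewrite (expnM 2 (2 * h * u) 5) (expnM 2 (2 * h) u) leq_exp2r // leq_exp2r //.
  by rewrite /u expn_gt0.
have F3 : 60 ^ 5 <= 2 ^ 30.
  rewrite (_ : 30 = 6 * 5); last by [].
  by rewrite (expnM 2 6 5) leq_exp2r.
have e0 : 6 * a + 5 * h < 5 * c by apply: arith1 xl hu uc.
move: E1 R K39 (K_gt0); generalize K => k E1 R k39 k0.
have E2 : k ^ (5 * c) <= k ^ (6 * a + 5 * h) * (2 ^ (10 * h) * 60 ^ 5 * 2 ^ (10 * (h * u))).
  apply: leq_trans E1 _.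
  apply: leq_trans (leq_mul F1 (leq_mul R F2)) _.
  move: (2 ^ (10 * h)) (60 ^ 5) (2 ^ (10 * (h * u))) (k ^ (6 * a + 5 * h)) => P Q T V.
  by apply: eq_leq; ring.
exact: (finish (erefl a) (erefl c) xl hu uc hu2 k39 k0 E2).
Qed.
Fixpoint chainok (s : seq nat) : bool :=
  if s is a :: t then
    (if t is b :: _ then (a < b) && (b <= a + a %/ 2) else true) && chainok t
  else true.

Lemma chain_cover s a x : chainok (a :: s) -> all prime (a :: s) ->
  a <= x -> x < last a s -> exists p, [/\ prime p, x < p & p <= x + x %/ 2].
Proof.
elim: s a => [|b s IH] a /=; first by move=> _ _ ax xa; have := leq_ltn_trans ax xa; rewrite ltnn.
move=> /andP[/andP[ab ba] cs] /andP[pa /andP[pb ps]] ax xl.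
case: (ltnP x b) => xb.
  exists b; split => //; apply: leq_trans ba _; apply: leq_add => //.
  exact: leq_div2r.
apply: (IH b cs _ xb xl); by rewrite /= pb ps.
Qed.

Definition chain := [:: 13; 19; 23; 31; 43; 61; 89; 131; 193; 283; 421; 631; 941; 1409;
  2113; 3169; 4751; 7121; 10667; 15991; 23981; 35969; 53951; 80923; 121379; 182059; 273083].

Lemma chain_ok : chainok (11 :: chain) && all prime (11 :: chain).
Proof. by vm_compute. Qed.

Lemma chain_last : 200 * 1000 <= last 11 chain.
Proof. by vm_compute. Qed.

Lemma Gbig x : 11 <= x -> exists p, [/\ prime p, x < p & p <= x + x %/ 2].
Proof.
move=> x11; case: (ltnP x (200 * 1000)) => xl.
  have /andP[c1 c2] := chain_ok.
  by apply: (chain_cover c1 c2 x11); apply: leq_trans xl chain_last.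
case: (boolP (has prime (iota x.+1 (x %/ 2)))) => [/hasP[p]|/hasPn hn].
  rewrite mem_iota => /andP[p1 p2] pp; exists p; split => //; lia.
exfalso; apply: (no_gap xl) => p pp p1 p2.
have : p \in iota x.+1 (x %/ 2) by rewrite mem_iota; apply/andP; split; lia.
by move/hn; rewrite pp.
Qed.

Definition bw := [:: 0; 2; 3; 5; 5; 7; 7; 11; 11; 11; 11].

Lemma bw_ok : all (fun n => (n == 0) || [&& prime (nth 0 bw n), n < nth 0 bw n & nth 0 bw n <= n.*2])
  (iota 0 11).
Proof. by vm_compute. Qed.

Lemma bertrand n : 0 < n -> exists p, [/\ prime p, n < p & p <= n.*2].
Proof.
move=> n0; case: (ltnP n 11) => n11.
  have := allP bw_ok n; rewrite mem_iota n11 /= => /(_ isT).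
  rewrite (gtn_eqF n0) /= => /and3P[h1 h2 h3]; by exists (nth 0 bw n).
have [p [pp p1 p2]] := Gbig n11; exists p; split => //; rewrite -addnn.
apply: leq_trans p2 _; rewrite leq_add2l; exact: leq_div.
Qed.

Definition gq := [:: 0; 2; 3; 5; 5; 7; 7; 11; 11; 11; 11].
Definition gP := [:: 0; 3; 5; 7; 7; 11; 11; 13; 13; 13; 13].

Lemma gap_ok : all (fun r => (r == 0) || [&& prime (nth 0 gq r), r < nth 0 gq r,
   all (fun n => ~~ prime n) (iota r.+1 (nth 0 gq r - r.+1)),
   prime (nth 0 gP r), nth 0 gq r < nth 0 gP r & nth 0 gP r <= nth 0 gq r + r]) (iota 0 11).
Proof. by vm_compute. Qed.

Lemma gap r q : 0 < r -> prime q -> r < q -> (forall p, prime p -> r < p -> q <= p) ->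
  exists P, [/\ prime P, q < P & P <= q + r].
Proof.
move=> r0 qp rq qmin; case: (ltnP r 11) => r11.
  have := allP gap_ok r; rewrite mem_iota r11 /= (gtn_eqF r0) /= => /(_ isT).
  move=> /and5P[h1 h2 /allP h3 h4 /andP[h5 h6]].
  have qe : q = nth 0 gq r.
    apply/eqP; rewrite eqn_leq (qmin _ h1 h2) /= leqNgt; apply/negP => qlt.
    have : q \in iota r.+1 (nth 0 gq r - r.+1) by rewrite mem_iota; apply/andP; split; lia.
    by move/h3; rewrite qp.
  by exists (nth 0 gP r); rewrite qe.
have [p1 [pp1 rp1 p1r]] := Gbig r11.
have qr : q <= r + r %/ 2 := leq_trans (qmin p1 pp1 rp1) p1r.
have q11 : 11 <= q by apply: leq_trans r11 (ltnW rq).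
have [P [PP qP Pq]] := Gbig q11.
exists P; split => //; apply: leq_trans Pq _; rewrite leq_add2l; lia.
Qed.
Lemma next_primeP n : [/\ prime (next_prime n), n < next_prime n &
  forall p, prime p -> n < p -> next_prime n <= p].
Proof.
rewrite /next_prime; case: ex_minnP => m /andP[nm pm] mmin; split => // p pp np.
by apply: mmin; rewrite np pp.
Qed.

Lemma nth_prime_gt i : i < nth_prime i.
Proof.
elim: i => [|i IH] //=; have [_ h _] := next_primeP (nth_prime i).
exact: leq_ltn_trans IH h.
Qed.

Lemma bidx_le r : 0 < r -> nth_prime (bidx r) <= r.
Proof.
move=> r0; rewrite /bidx; elim/big_ind: _ => //.
move=> x y hx hy; rewrite /maxn; by case: ifP.
Qed.

Lemma bidx_gt r : r < nth_prime (bidx r).+1.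
Proof.
rewrite ltnNge; apply/negP => h.
have hb : (bidx r).+1 < r.+1.
  by rewrite ltnS; apply: leq_trans (ltnW (nth_prime_gt _)) h.
have := @leq_bigmax_cond _ (fun b : 'I_r.+1 => nth_prime b <= r) (fun b => b : nat) (Ordinal hb) h.
by rewrite -/(bidx r) /= ltnn.
Qed.

Lemma qspec r : 0 < r -> let q := nth_prime (bidx r).+1 in
  [/\ prime q, r < q & forall p, prime p -> r < p -> q <= p].
Proof.
move=> r0 /=; have [h1 h2 h3] := next_primeP (nth_prime (bidx r)).
split => //; first exact: bidx_gt.
move=> p pp rp; apply: h3 => //; exact: leq_ltn_trans (bidx_le r0) rp.
Qed.

Definition hS r q a := if q <= r then 0 else q ^ a.-1 * (q - r).

Lemma S_pow r p k : prime p -> 0 < k -> S r (p ^ k) = hS r p k.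
Proof.
move=> pp k0; rewrite /S primesX // primes_prime // big_seq1 pfactorK //.
Qed.

Lemma S_mul r a b : 0 < a -> 0 < b -> coprime a b -> S r (a * b) = S r a * S r b.
Proof.
move=> a0 b0 cab.
have dis : forall q, q \in primes a -> q \in primes b -> False.
  move=> q; rewrite !mem_primes => /and3P[qp _ qa] /and3P[_ _ qb].
  have : q %| gcdn a b by rewrite dvdn_gcd qa qb.
  by rewrite (eqP cab) dvdn1 => /eqP q1; rewrite q1 in qp.
have pe : perm_eq (primes (a * b)) (primes a ++ primes b).
  apply: uniq_perm; first exact: primes_uniq.
    rewrite cat_uniq !primes_uniq /= andbT; apply/hasPn => q qb; apply/negP => qa.
    exact: dis qa qb.
  by move=> q; rewrite mem_cat primesM.
rewrite /S (perm_big _ pe) big_cat /=; congr (_ * _).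
  apply: eq_big_seq => q qa; rewrite lognM //.
  have -> : logn q b = 0.
    apply/eqP; rewrite -leqn0 leqNgt logn_gt0; apply/negP => qb; exact: dis qa qb.
  by rewrite addn0.
apply: eq_big_seq => q qb; rewrite lognM //.
have -> : logn q a = 0.
  apply/eqP; rewrite -leqn0 leqNgt logn_gt0; apply/negP => qa; exact: dis qa qb.
by rewrite add0n.
Qed.

Lemma coprime_primes p q : prime p -> prime q -> p != q -> coprime p q.
Proof. by move=> pp qp pq; rewrite prime_coprime // dvdn_prime2. Qed.
Lemma notF r n m : inB r m -> n < m -> S r m <= S r n -> ~ inF r n.
Proof. by move=> Bm nm Sm [_ H]; have := H m Bm nm; rewrite ltnNge Sm. Qed.

Lemma S_prime r p : prime p -> S r p = hS r p 1.
Proof. by move=> pp; rewrite -{1}(expn1 p) S_pow. Qed.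

Lemma hS1 r p : r < p -> hS r p 1 = p - r.
Proof. by move=> rp; rewrite /hS leqNgt rp /= expn0 mul1n. Qed.

Lemma hSk r p k : r < p -> hS r p k = p ^ k.-1 * (p - r).
Proof. by move=> rp; rewrite /hS leqNgt rp. Qed.

Lemma part1 r : 0 < r -> ~ inF r (nth_prime (bidx r).+1 ^ 2).
Proof.
move=> r0; have [qp rq qmin] := qspec r0.
move: (nth_prime (bidx r).+1) qp rq qmin => q qp rq qmin.
have [P [PP qP Pq]] := gap r0 qp rq qmin.
have rP : r < P by apply: ltn_trans rq qP.
have cqP : coprime q P by apply: coprime_primes => //; rewrite neq_ltn qP.
have Sm : S r (q * P) = (q - r) * (P - r).
  by rewrite S_mul ?prime_gt0 // !S_prime // !hS1.
have Sn : S r (q ^ 2) = q * (q - r) by rewrite S_pow // hSk.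
apply: (notF (m := q * P)).
- split; first by rewrite muln_gt0 !prime_gt0.
  by rewrite Sm muln_gt0 !subn_gt0 rq rP.
- by rewrite expnS expn1 ltn_mul2l prime_gt0.
- rewrite Sm Sn mulnC leq_mul2r; apply/orP; right; lia.
Qed.

Lemma part2 r p : 0 < r -> prime p -> ~ inF r (p ^ 3).
Proof.
move=> r0 pp.
case: (leqP p r) => pr.
  move=> [[_ h] _]; move: h; rewrite S_pow // /hS pr //.
have [q0p rq0 q0min] := qspec r0.
move: (nth_prime (bidx r).+1) q0p rq0 q0min => q0 q0p rq0 q0min.
have q0le : q0 <= p := q0min p pp pr.
have Sn : S r (p ^ 3) = p ^ 2 * (p - r) by rewrite S_pow // hSk.
have p0 := prime_gt0 pp.
case: (ltnP q0 p) => q0p'; last first.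
  have e : q0 = p by apply/eqP; rewrite eqn_leq q0le.
  rewrite -e in pp pr Sn p0 *.
  have [P [PP qP Pq]] := gap r0 q0p rq0 q0min.
  have rP : r < P by apply: ltn_trans rq0 qP.
  have cqP : coprime (q0 ^ 2) P by apply: coprimeXl; apply: coprime_primes => //; rewrite neq_ltn qP.
  have Sm : S r (q0 ^ 2 * P) = q0 * (q0 - r) * (P - r).
    by rewrite S_mul ?expn_gt0 ?prime_gt0 // S_pow // S_prime // hSk // hS1.
  apply: (notF (m := q0 ^ 2 * P)).
  - split; first by rewrite muln_gt0 expn_gt0 !prime_gt0.
    by rewrite Sm !muln_gt0 !subn_gt0 rq0 rP prime_gt0.
  - by rewrite (expnS q0 2) [q0 ^ 2 * P]mulnC ltn_mul2r expn_gt0 p0 qP.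
  - rewrite Sm Sn (expnS q0 1) expn1 -!mulnA leq_mul2l; apply/orP; right.
    rewrite [q0 * (q0 - r)]mulnC leq_mul2l; apply/orP; right; lia.
have [b [bp rb br]] := bertrand r0.
have q02 : q0 <= r.*2 := leq_trans (q0min b bp rb) br.
set n := p ^ 2 %/ q0.
have q00 := prime_gt0 q0p.
have n0 : 0 < n by rewrite /n divn_gt0 // (expnS p 1) expn1; apply: leq_trans q0le _; rewrite leq_pmulr.
have [P [PP nP Pn]] := bertrand n0.
have big : p ^ 2 < q0 * P.
  have : p ^ 2 < (n + 1) * q0.
    by rewrite {1}(divn_eq (p ^ 2) q0) mulnDl mul1n -/n ltn_add2l ltn_pmod.
  move=> h; apply: leq_trans h _; rewrite mulnC leq_mul2l addn1 nP orbT //.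
have pP : p < P.
  rewrite ltnNge; apply/negP => Pp.
  have : q0 * P <= p * p by apply: leq_mul => //; apply: ltnW.
  by rewrite -(expn1 p) -expnS expn1 leqNgt big.
have rP : r < P := ltn_trans pr pP.
have cpq : coprime p q0 by apply: coprime_primes => //; rewrite neq_ltn q0p' orbT.
have cpqP : coprime (p * q0) P.
  rewrite coprimeMl; apply/andP; split; apply: coprime_primes => //.
    by rewrite neq_ltn pP.
  by rewrite neq_ltn (ltn_trans q0p' pP).
have Sm : S r (p * q0 * P) = (p - r) * (q0 - r) * (P - r).
  by rewrite S_mul ?muln_gt0 ?prime_gt0 // S_mul ?prime_gt0 // !S_prime // !hS1.
apply: (notF (m := p * q0 * P)).
- split; first by rewrite !muln_gt0 !prime_gt0.
  by rewrite Sm !muln_gt0 !subn_gt0 pr rq0 rP.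
- by rewrite (expnS p 2) -mulnA ltn_mul2l p0.
- rewrite Sm Sn -mulnA mulnC leq_mul2r; apply/orP; right.
  have h1 : n * q0 <= p ^ 2 by rewrite /n leq_divM.
  have h2 : (q0 - r) * (P - r) <= (q0 - r) * P by rewrite leq_mul2l leq_subr orbT.
  apply: leq_trans h2 _; apply: leq_trans h1.
  have h3 : (q0 - r) * P <= (q0 - r) * n.*2 by rewrite leq_mul2l Pn orbT.
  apply: leq_trans h3 _; rewrite -muln2 mulnCA leq_mul2l; apply/orP; right.
  move: q02; rewrite -muln2; lia.
Qed.

Theorem theorem3p2 (r p : nat) :
  0 < r -> prime p ->
  ~ inF r (nth_prime (bidx r).+1 ^ 2) /\ ~ inF r (p ^ 3).
Proof. move=> r0 pp; split; [exact: part1 | exact: part2]. Qed.
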